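(* Fix $\epsilon>0$, a function $A:(2\pi,\infty)\to[0,\infty)$ and a function $B:\{(\beta_L,\beta_R)\in(0,\infty)^2:\beta_L\beta_R>4\pi^2\}\to[0,\infty)$. Consider the class $\mathcal{C}$ of all unitary, modular invariant 2D CFT spectra (any central charge $c\geqslant0$) with a normalizable vacuum ($n_{0,0}\geqslant1$) satisfying $$\sum_{h+\bar h\leqslant\frac c{12}+\epsilon}n_{h,\bar h}e^{-(h+\bar h)\beta}\leqslant A(\beta)\ \ (\beta>2\pi),\qquad \sum_{\min(h,\bar h)\leqslant\frac{c}{24}}n_{h,\bar h}e^{-h\beta_L-\bar h\beta_R}\leqslant B(\beta_L,\beta_R)\ \ (\beta_L\beta_R>4\pi^2).$$ Then for each $(\beta_L,\beta_R)$ with $\beta_L\beta_R\neq4\pi^2$ there is a constant $K<\infty$, independent of the theory in $\mathcal{C}$ and of $c$, such that every theory in $\mathcal{C}$ satisfies $$\left|\log Z(\beta_L,\beta_R)-\tfrac c{24}(\beta_L+\beta_R)\right|\leqslant K\ \text{ if }\beta_L\beta_R>4\pi^2,\qquad \left|\log Z(\beta_L,\beta_R)-\tfrac{\pi^2c}{6}\left(\tfrac1{\beta_L}+\tfrac1{\beta_R}\right)\right|\leqslant K\ \text{ if }\beta_L\beta_R<4\pi^2.$$ That is, as $c\to\infty$ with $\beta_L,\beta_R$ fixed, the free energy equals the thermal AdS value $\frac c{24}(\beta_L+\beta_R)+O(1)$ for $\beta_L\beta_R>4\pi^2$ and the BTZ value $\frac{\pi^2c}{6}(\frac1{\beta_L}+\frac1{\beta_R})+O(1)$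 for $\beta_L\beta_R<4\pi^2$.
   Context: A unitary, modular invariant 2D CFT spectrum consists of a real number $c\geqslant0$ (central charge) and a countable collection of pairs $(h,\bar h)$ with $h,\bar h\geqslant0$, each with multiplicity $n_{h,\bar h}\in\mathbb{N}$, such that $Z(\beta_L,\beta_R)=\sum_{h,\bar h}n_{h,\bar h}e^{-(h-\frac c{24})\beta_L-(\bar h-\frac c{24})\beta_R}$ is finite for all $\beta_L,\beta_R>0$ and $Z(\beta_L,\beta_R)=Z(4\pi^2/\beta_L,4\pi^2/\beta_R)$. (This statement is posed as a conjecture of Hartman–Keller–Stoica and is proved in the paper.) *)

(* Defs.v *)
From HB Require Import structures.
From mathcomp Require Import all_boot all_order all_algebra.
From mathcomp Require Import all_classical all_reals all_analysis.
Set Implicit Arguments. Unset Strict Implicit. Unset Printing Implicit Defensive.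
Import Order.TTheory GRing.Theory Num.Theory.
Local Open Scope classical_set_scope.
Local Open Scope ring_scope.

Section CFT.
Variable R : realType.

(* A candidate 2D CFT spectrum: a central charge and a multiplicity function
   n_{h,hbar} on pairs (h,hbar) (zero off the spectrum). *)
Record spectrum := Spectrum {
  cc : R;
  mult : R -> R -> nat
}.

Definition support (S : spectrum) : set (R * R) :=
  [set p | (mult S p.1 p.2 > 0)%N].

Definition Zpart (S : spectrum) (bL bR : R) : \bar R :=
  \esum_(p in support S)
    ((mult S p.1 p.2)%:R * expR (- (p.1 - cc S / 24) * bL - (p.2 - cc S / 24) * bR))%:E.

Definition is_CFT_spectrum (S : spectrum) : Prop :=
  [/\ 0 <= cc S,
      countable (support S),
      (forall p, support S p -> 0 <= p.1 /\ 0 <= p.2),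
      (forall bL bR, 0 < bL -> 0 < bR -> (Zpart S bL bR < +oo)%E) &
      (forall bL bR, 0 < bL -> 0 < bR ->
         Zpart S bL bR = Zpart S (4 * pi ^+ 2 / bL) (4 * pi ^+ 2 / bR))].

Definition has_vacuum (S : spectrum) : Prop := (1 <= mult S 0 0)%N.

Definition light_sum (S : spectrum) (eps beta : R) : \bar R :=
  \esum_(p in [set p | support S p /\ p.1 + p.2 <= cc S / 12 + eps])
    ((mult S p.1 p.2)%:R * expR (- (p.1 + p.2) * beta))%:E.

Definition twist_sum (S : spectrum) (bL bR : R) : \bar R :=
  \esum_(p in [set p | support S p /\ Num.min p.1 p.2 <= cc S / 24])
    ((mult S p.1 p.2)%:R * expR (- p.1 * bL - p.2 * bR))%:E.

(* log Z as a real number (Z is finite and positive for the theories considered) *)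
Definition logZ (S : spectrum) (bL bR : R) : R := ln (fine (Zpart S bL bR)).

End CFT.

(* Main.v *)
Require Import Defs.
From HB Require Import structures.
From mathcomp Require Import all_boot all_order all_algebra.
From mathcomp Require Import all_classical all_reals all_analysis.
From mathcomp Require Import ring lra.
Import Order.TTheory GRing.Theory Num.Theory.
Local Open Scope classical_set_scope.
Local Open Scope ring_scope.

Section esumaux.
Variables (R : realType) (T : choiceType).

Lemma esum_subset (I J : set T) (a : T -> \bar R) : I `<=` J ->
  (forall i, (0 <= a i)%E) -> (esum I a <= esum J a)%E.
Proof.
move=> IJ a0; rewrite (esum_mkcond I) (esum_mkcond J); apply: le_esum => i _.
case: (boolP (i \in I)) => iI.
  by rewrite ifT //; apply/mem_set/IJ; exact/set_mem.
by case: ifP.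
Qed.

Lemma esum_single (I : set T) (a : T -> \bar R) t : I t ->
  (forall i, (0 <= a i)%E) -> (a t <= esum I a)%E.
Proof.
move=> It a0; apply: esum_ge; exists [set t].
  by split; [exact: finite_set1| by move=> ? ->].
by rewrite fsbig_set1.
Qed.

Lemma esum_scale (I : set T) (a : T -> \bar R) (r : R) : 0 <= r ->
  (forall i, (0 <= a i)%E) ->
  (esum I (fun i => r%:E * a i) <= r%:E * esum I a)%E.
Proof.
move=> r0 a0; apply: ge_ereal_sup => _ [X XI <-].
rewrite -ge0_mule_fsumr //; apply: lee_wpmul2l; first by rewrite lee_fin.
by apply: ereal_sup_ubound; exists X.
Qed.
End esumaux.

Lemma c4_gt0 (R : realType) : 0 < 4 * pi ^+ 2 :> R.
Proof. by rewrite mulr_gt0 // exprn_gt0 // pi_gt0. Qed.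

Lemma step (R : realType) (B : R -> R -> R) (S : spectrum R) u v a b :
 is_CFT_spectrum S ->
 (forall bL' bR', 0 < bL' -> 0 < bR' -> 4 * pi ^+ 2 < bL' * bR' ->
        (twist_sum S bL' bR' <= (B bL' bR')%:E)%E) ->
 0 < u -> 0 < v -> 4 * pi ^+ 2 < u * v -> 0 < a -> 0 < b ->
 4 * pi ^+ 2 / a <= u -> 4 * pi ^+ 2 / b <= v ->
 (Zpart S u v <= (expR (cc S / 24 * (u + v)) * B u v)%:E + Zpart S a b)%E.
Proof.
case=> c0 _ _ fin modi Htw u0 v0 uv a0 b0 au bv.
have c4 := c4_gt0 R.
have ca0 : 0 < 4 * pi ^+ 2 / a by rewrite divr_gt0.
have cb0 : 0 < 4 * pi ^+ 2 / b by rewrite divr_gt0.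
rewrite /Zpart (esumID [set p : R * R | Num.min p.1 p.2 <= cc S / 24]); last first.
  by move=> p _; rewrite lee_fin mulr_ge0 // expR_ge0.
apply: leeD.
  rewrite EFinM; apply: (le_trans _ (lee_wpmul2l _ (Htw u v u0 v0 uv))); last first.
    by rewrite lee_fin expR_ge0.
  rewrite /twist_sum.
  set I := [set p : R * R | Defs.support S p /\ Num.min p.1 p.2 <= cc S / 24].
  have -> : Defs.support S `&` [set p : R * R | Num.min p.1 p.2 <= cc S / 24] = I by [].
  apply: (@le_trans _ _ (esum I (fun p => (expR (cc S/24*(u+v)))%:E *
      ((mult S p.1 p.2)%:R * expR (- p.1 * u - p.2 * v))%:E)%E)); last first.
    by apply: esum_scale; [exact: expR_ge0|move=> p; rewrite lee_fin mulr_ge0 // expR_ge0].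
  apply: le_esum => p _; rewrite -EFinM lee_fin mulrCA -expRD.
  apply: ler_wpM2l => //; rewrite ler_expR; lra.
apply: (@le_trans _ _ (esum (Defs.support S `&` ~` [set p : R * R | Num.min p.1 p.2 <= cc S / 24])
   (fun p => ((mult S p.1 p.2)%:R * expR (- (p.1 - cc S / 24) * (4 * pi ^+ 2 / a)
        - (p.2 - cc S / 24) * (4 * pi ^+ 2 / b)))%:E))).
  apply: le_esum => p [_ /= Hp]; rewrite lee_fin; apply: ler_wpM2l => //.
  have : cc S / 24 < Num.min p.1 p.2 by rewrite ltNge; apply/negP.
  rewrite lt_min => /andP[h1 h2]; rewrite ler_expR.
  have k1 : 0 <= p.1 - cc S / 24 by rewrite subr_ge0 ltW.
  have k2 : 0 <= p.2 - cc S / 24 by rewrite subr_ge0 ltW.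
  have k3 : 0 <= u - 4 * pi ^+ 2 / a by rewrite subr_ge0.
  have k4 : 0 <= v - 4 * pi ^+ 2 / b by rewrite subr_ge0.
  have := mulr_ge0 k1 k3; have := mulr_ge0 k2 k4.
  nra.
apply: (@le_trans _ _ (Zpart S (4 * pi ^+ 2 / a) (4 * pi ^+ 2 / b))).
  apply: esum_subset; first by move=> p [].
  by move=> p; rewrite lee_fin mulr_ge0 // expR_ge0.
rewrite modi //.
have -> : 4 * pi ^+ 2 / (4 * pi ^+ 2 / a) = a :> R.
  by rewrite invf_div mulrC divfK // gt_eqF.
have -> : 4 * pi ^+ 2 / (4 * pi ^+ 2 / b) = b :> R.
  by rewrite invf_div mulrC divfK // gt_eqF.
by [].
Qed.

Lemma Zpart_ge0 (R : realType) (S : spectrum R) u v : (0 <= Zpart S u v)%E.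
Proof. by apply: esum_ge0 => p _; rewrite lee_fin mulr_ge0 // expR_ge0. Qed.

Lemma Zpart_fin (R : realType) (S : spectrum R) u v : is_CFT_spectrum S ->
  0 < u -> 0 < v -> Zpart S u v = (fine (Zpart S u v))%:E.
Proof.
case=> _ _ _ fin _ u0 v0; rewrite fineK // ge0_fin_numE ?fin //; exact: Zpart_ge0.
Qed.

Lemma hks (R : realType) (eps : R) (A : R -> R) (S : spectrum R) g :
  0 < eps -> is_CFT_spectrum S ->
  (forall beta, 2 * pi < beta -> (light_sum S eps beta <= (A beta)%:E)%E) ->
  2 * pi < g ->
  fine (Zpart S g g) * (1 - expR (- eps * (g - 4 * pi ^+ 2 / g)))
    <= expR (cc S / 24 * (g + g)) * A g.
Proof.
move=> e0 HS Hl g2.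
have HS' := HS; case: HS' => c0 _ _ fin modi.
have p0 : 0 < pi :> R by exact: pi_gt0.
have g0 : 0 < g by lra.
have c4 := c4_gt0 R.
have gg : 4 * pi ^+ 2 < g * g by nra.
have g'0 : 0 < 4 * pi ^+ 2 / g by rewrite divr_gt0.
have g'g : 4 * pi ^+ 2 / g < g by rewrite ltr_pdivrMr.
set g' := 4 * pi ^+ 2 / g in g'0 g'g *.
set k := expR (- eps * (g - g')).
have H : (Zpart S g g <= (expR (cc S / 24 * (g + g)) * A g)%:E + k%:E * Zpart S g g)%E.
  rewrite {1}/Zpart (esumID [set p : R * R | p.1 + p.2 <= cc S / 12 + eps]); last first.
    by move=> p _; rewrite lee_fin mulr_ge0 // expR_ge0.
  apply: leeD.
    rewrite EFinM; apply: (le_trans _ (lee_wpmul2l _ (Hl g g2))); last first.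
      by rewrite lee_fin expR_ge0.
    rewrite /light_sum.
    set I := [set p : R * R | Defs.support S p /\ p.1 + p.2 <= cc S / 12 + eps].
    have -> : Defs.support S `&` [set p : R * R | p.1 + p.2 <= cc S / 12 + eps] = I by [].
    apply: (@le_trans _ _ (esum I (fun p => (expR (cc S/24*(g+g)))%:E *
      ((mult S p.1 p.2)%:R * expR (- (p.1 + p.2) * g))%:E)%E)); last first.
      by apply: esum_scale; [exact: expR_ge0|move=> p; rewrite lee_fin mulr_ge0 // expR_ge0].
    apply: le_esum => p _; rewrite -EFinM lee_fin mulrCA -expRD.
    apply: ler_wpM2l => //; rewrite ler_expR; lra.
  apply: (@le_trans _ _ (esum (Defs.support S `&` ~` [set p : R * R | p.1 + p.2 <= cc S / 12 + eps])
     (fun p => k%:E * ((mult S p.1 p.2)%:R * expR (- (p.1 - cc S / 24) * g'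
        - (p.2 - cc S / 24) * g'))%:E)%E)).
    apply: le_esum => p [_ /= Hp]; rewrite -EFinM lee_fin mulrCA -expRD.
    apply: ler_wpM2l => //.
    have : cc S / 12 + eps < p.1 + p.2 by rewrite ltNge; apply/negP.
    move=> h; rewrite ler_expR.
    have k1 : 0 <= p.1 + p.2 - cc S / 12 - eps by lra.
    have k2 : 0 <= g - g' by lra.
    have := mulr_ge0 k1 k2; nra.
  apply: (@le_trans _ _ (k%:E * esum (Defs.support S `&` ~` [set p : R * R | (p.1 + p.2 <= cc S / 12 + eps)%R])
     (fun p => ((mult S p.1 p.2)%:R * expR (- (p.1 - cc S / 24) * g'
        - (p.2 - cc S / 24) * g'))%R%:E))%E).
    apply: esum_scale; first exact: expR_ge0.
    by move=> p; rewrite lee_fin mulr_ge0 // expR_ge0.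
  apply: lee_wpmul2l; first by rewrite lee_fin expR_ge0.
  apply: (@le_trans _ _ (Zpart S g' g')).
    apply: esum_subset; first by move=> p [].
    by move=> p; rewrite lee_fin mulr_ge0 // expR_ge0.
  rewrite modi // /g'.
  have -> : 4 * pi ^+ 2 / (4 * pi ^+ 2 / g) = g :> R.
    by rewrite invf_div mulrC divfK // gt_eqF.
  by [].
move: H; rewrite (@Zpart_fin R S g g HS g0 g0) -EFinM -EFinD lee_fin.
have : 0 <= k by exact: expR_ge0.
nra.
Qed.

Definition Tm (R : realType) (P : R * R) : R * R :=
  if P.1 <= P.2 then (4 * pi ^+ 2 / P.1, P.1 + P.2 - 4 * pi ^+ 2 / P.1)
  else (P.1 + P.2 - 4 * pi ^+ 2 / P.2, 4 * pi ^+ 2 / P.2).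

Definition ads (R : realType) (P : R * R) :=
  [/\ 0 < P.1, 0 < P.2 & 4 * pi ^+ 2 < P.1 * P.2].

Arguments Tm {R} P.
Arguments ads {R} P.

Lemma Tm_half (R : realType) (u v : R) : 0 < u -> 0 < v -> 4 * pi ^+ 2 < u * v ->
  let w := 4 * pi ^+ 2 / u in
  [/\ 0 < w, 0 < u + v - w, 4 * pi ^+ 2 < w * (u + v - w),
      4 * pi ^+ 2 / w <= u & 4 * pi ^+ 2 / (u + v - w) <= v /\
      ((u + v) * u < 2 * (4 * pi ^+ 2) ->
        (u + v) ^+ 2 * (u * v - 4 * pi ^+ 2) <=
        4 * (4 * pi ^+ 2) * (w * (u + v - w) - 4 * pi ^+ 2))].
Proof.
move=> u0 v0 uv w.
have c4 := c4_gt0 R.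
set c := 4 * pi ^+ 2 in c4 uv w *.
have w0 : 0 < w by rewrite divr_gt0.
have wu : w * u = c by rewrite /w divfK // gt_eqF.
have vw : w < v by rewrite /w ltr_pdivrMr // mulrC.
have b0 : 0 < u + v - w by lra.
split => //.
- nra.
- by rewrite ler_pdivrMr // mulrC wu.
split; first by rewrite ler_pdivrMr //; nra.
move=> h.
have e1 : c * c * 4 - (u + v) ^+ 2 * (u * u) > 0 by nra.
have e2 : 4 * c * w - (u + v) ^+ 2 * u > 0.
  have : (4 * c * w - (u + v) ^+ 2 * u) * u > 0 by nra.
  by rewrite pmulr_lgt0.
have : (4 * c * w - (u + v) ^+ 2 * u) * (v - w) > 0 by rewrite mulr_gt0 // subr_gt0.
nra.
Qed.

Lemma Tm_prop (R : realType) (P : R * R) : ads P ->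
  [/\ ads (Tm P), (Tm P).1 + (Tm P).2 = P.1 + P.2,
      4 * pi ^+ 2 / (Tm P).1 <= P.1, 4 * pi ^+ 2 / (Tm P).2 <= P.2 &
      (~ (2 * (4 * pi ^+ 2) <= (P.1 + P.2) * P.1 /\ 2 * (4 * pi ^+ 2) <= (P.1 + P.2) * P.2) ->
        (P.1 + P.2) ^+ 2 * (P.1 * P.2 - 4 * pi ^+ 2) <=
        4 * (4 * pi ^+ 2) * ((Tm P).1 * (Tm P).2 - 4 * pi ^+ 2))].
Proof.
case: P => u v [/= u0 v0 uv]; rewrite /Tm /=.
case: ifP => huv.
  have [w0 b0 p1 h1 [h2 h3]] := @Tm_half R u v u0 v0 uv.
  split => //=; first by lra.
  move=> nt; apply: h3.
  have c4 := c4_gt0 R.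
  rewrite ltNge; apply/negP => h; apply: nt; split => //.
  apply: (le_trans h); apply: ler_wpM2l; lra.
have vu : v < u by rewrite ltNge huv.
rewrite [u * v]mulrC in uv.
have [w0 b0 p1 h1 [h2 h3]] := @Tm_half R v u v0 u0 uv.
set w := 4 * pi ^+ 2 / v in w0 b0 p1 h1 h2 h3 *.
have c4 := c4_gt0 R.
rewrite !(addrC u v) (mulrC u v).
split => //=.
- by rewrite /ads /=; split => //; rewrite [_ * w]mulrC.
- by rewrite subrK.
move=> nt; rewrite [(v + u - w) * w]mulrC; apply: h3.
rewrite ltNge; apply/negP => h; apply: nt; split => //.
apply: (le_trans h); apply: ler_wpM2l; lra.
Qed.

Lemma iter_prop (R : realType) (P : R * R) n : ads P ->
  ads (iter n Tm P) /\ (iter n Tm P).1 + (iter n Tm P).2 = P.1 + P.2.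
Proof.
move=> hP; elim: n => [|n [h1 h2]] //=.
by have [? ? ? ? ?] := @Tm_prop R _ h1; split => //; rewrite -h2.
Qed.

Lemma term_exists (R : realType) (P : R * R) : ads P ->
  exists N, 2 * (4 * pi ^+ 2) <= (P.1 + P.2) * (iter N Tm P).1 /\
            2 * (4 * pi ^+ 2) <= (P.1 + P.2) * (iter N Tm P).2.
Proof.
move=> hP; apply: contrapT => H.
have nt n : ~ (2 * (4 * pi ^+ 2) <= (P.1 + P.2) * (iter n Tm P).1 /\
            2 * (4 * pi ^+ 2) <= (P.1 + P.2) * (iter n Tm P).2).
  by move=> h; apply: H; exists n.
have [u0 v0 uv] := hP.
have c4 := c4_gt0 R.
set c := 4 * pi ^+ 2 in c4 nt H uv *.
set s := P.1 + P.2 in nt H *.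
pose e n := (iter n Tm P).1 * (iter n Tm P).2 - c.
have e0 : 0 < e 0%N by rewrite /e /= subr_gt0.
have s2 : 4 * c < s ^+ 2.
  rewrite /s sqrrD; have := sqr_ge0 (P.1 - P.2); rewrite sqrrB; lra.
set D := (s ^+ 2 - 4 * c) * e 0%N.
have D0 : 0 < D by rewrite mulr_gt0 // subr_gt0.
have claim n : 4 * c * e 0%N + n%:R * D <= 4 * c * e n.
  elim: n => [|n IH]; first by rewrite mul0r addr0.
  have [hn sn] := @iter_prop R P n hP.
  have [_ _ _ _ hx] := @Tm_prop R _ hn.
  have := hx; rewrite sn -/s => /(_ (nt n)); rewrite -iterS -/(e n) -/(e n.+1) => hx'.
  have en : e 0%N <= e n.
    have : 0 <= n%:R * D by rewrite mulr_ge0 // ltW.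
    move: IH; rewrite -/c; nra.
  have -> : (n.+1)%:R = n%:R + 1 :> R by rewrite natr1.
  rewrite [(n%:R + 1) * D]mulrDl mul1r.
  have : (s ^+ 2 - 4 * c) * e 0%N <= (s ^+ 2 - 4 * c) * e n.
    by rewrite ler_wpM2l // subr_ge0 ltW.
  move: hx'; rewrite -/c -/D => hx'; lra.
have up n : 4 * c * e n <= c * s ^+ 2.
  have [[a0 b0 ab] sn] := @iter_prop R P n hP.
  rewrite /e; move: sn; rewrite -/s => sn.
  have : 4 * ((iter n Tm P).1 * (iter n Tm P).2) <= s ^+ 2.
    rewrite -sn sqrrD; have := sqr_ge0 ((iter n Tm P).1 - (iter n Tm P).2); rewrite sqrrB; lra.
  nra.
have := archi_boundP (ltW (divr_gt0 (mulr_gt0 c4 (lt_trans (mulr_gt0 _ c4) s2)) D0)).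
set n := Num.Def.archi_bound _ => hn.
have := claim n; have := up n.
move: hn; rewrite ltr_pdivrMr // => hn.
have : 0 < 4 * c * e 0%N by rewrite mulr_gt0 // mulr_gt0.
lra.
Qed.

Lemma chain (R : realType) (B : R -> R -> R) (S : spectrum R) (P : R * R) n :
 is_CFT_spectrum S ->
 (forall bL' bR', 0 < bL' -> 0 < bR' -> 4 * pi ^+ 2 < bL' * bR' ->
        (twist_sum S bL' bR' <= (B bL' bR')%:E)%E) ->
 ads P ->
 (Zpart S P.1 P.2 <= (expR (cc S / 24 * (P.1 + P.2)) *
     \sum_(i < n) B (iter i Tm P).1 (iter i Tm P).2)%:E
   + Zpart S (iter n Tm P).1 (iter n Tm P).2)%E.
Proof.
move=> HS Htw hP; elim: n => [|n IH].
  by rewrite big_ord0 mulr0 add0e.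
apply: (le_trans IH).
rewrite big_ord_recr /=; set e := expR _; rewrite mulrDr EFinD -addeA; apply: leeD2l.
have [hn sn] := @iter_prop R P n hP.
have [ht _ h1 h2 _] := @Tm_prop R _ hn.
have [u0 v0 uv] := hn; have [a0 b0 _] := ht.
rewrite /e -sn; exact: step.
Qed.

Lemma ads_bound (R : realType) (eps : R) (A : R -> R) (B : R -> R -> R) (P : R * R) :
  0 < eps -> ads P ->
  exists K : R, forall S : spectrum R,
    is_CFT_spectrum S -> has_vacuum S ->
    (forall beta, 2 * pi < beta -> (light_sum S eps beta <= (A beta)%:E)%E) ->
    (forall bL' bR', 0 < bL' -> 0 < bR' -> 4 * pi ^+ 2 < bL' * bR' ->
        (twist_sum S bL' bR' <= (B bL' bR')%:E)%E) ->
    `| logZ S P.1 P.2 - cc S / 24 * (P.1 + P.2) | <= K.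
Proof.
move=> e0 hP.
have [N [t1 t2]] := @term_exists R P hP.
have [u0 v0 uv] := hP.
have p0 : 0 < pi :> R by exact: pi_gt0.
have c4 := c4_gt0 R.
set s := P.1 + P.2 in t1 t2 *.
have s2 : 4 * (4 * pi ^+ 2) < s ^+ 2.
  rewrite /s [(P.1 + P.2) ^+ 2]sqrrD; have := sqr_ge0 (P.1 - P.2); rewrite [(P.1 - P.2) ^+ 2]sqrrB; lra.
have s0 : 0 < s by rewrite /s; lra.
set g := s / 2.
have g0 : 0 < g by rewrite /g divr_gt0.
have g2 : 2 * pi < g.
  rewrite /g ltr_pdivlMr //.
  have : (4 * pi) ^+ 2 < s ^+ 2 by rewrite exprMn; lra.
  rewrite ltr_pXn2r // ?nnegrE; [lra | lra | lra].
set k := expR (- eps * (g - 4 * pi ^+ 2 / g)).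
have k1 : k < 1.
  rewrite /k expR_lt1 mulNr oppr_lt0 mulr_gt0 // subr_gt0 ltr_pdivrMr; last by lra.
  rewrite -expr2; nra.
set HK := A g / (1 - k).
set K0 := \sum_(i < N) B (iter i Tm P).1 (iter i Tm P).2
          + B (iter N Tm P).1 (iter N Tm P).2 + HK.
exists (ln K0) => S HS Hv Hl Htw.
set x := cc S / 24.
have [hN sN] := @iter_prop R P N hP.
have [a0 b0 ab] := hN.
have H1 := @chain R B S P N HS Htw hP.
have H2 := @step R B S (iter N Tm P).1 (iter N Tm P).2 g g HS Htw a0 b0 ab.
have gg : 4 * pi ^+ 2 / g <= (iter N Tm P).1 /\ 4 * pi ^+ 2 / g <= (iter N Tm P).2.
  by split; rewrite ler_pdivrMr ?divr_gt0 // /g; lra.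
have {}H2 := H2 g0 g0 gg.1 gg.2.
have H3 := @hks R eps A S g e0 HS Hl g2.
rewrite sN -/s in H2.
have gs : g + g = s by rewrite /g; lra.
rewrite gs -/k -/x in H3.
move: H1 H2; rewrite -/s -/x.
rewrite (@Zpart_fin R S _ _ HS u0 v0).
rewrite (@Zpart_fin R S _ _ HS a0 b0).
rewrite (@Zpart_fin R S g g HS g0 g0).
rewrite -!EFinD !lee_fin => H1 H2.
set z := fine (Zpart S P.1 P.2) in H1 *.
have ex0 : 0 < expR (x * s) := expR_gt0 _.
have h3 : fine (Zpart S g g) <= expR (x * s) * HK.
  by rewrite /HK mulrA ler_pdivlMr ?subr_gt0.
have zup : z <= expR (x * s) * K0.
  move: H1 H2 h3; set e := expR (x * s) => H1 H2 h3.
  apply: (le_trans H1); rewrite /K0 !mulrDr -addrA lerD2l.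
  by apply: (le_trans H2); rewrite lerD2l.
have zlo : expR (x * s) <= z.
  have : (((mult S 0 0)%:R * expR (- (0 - x) * P.1 - (0 - x) * P.2))%:E
           <= Zpart S P.1 P.2)%E.
    rewrite /Zpart; apply: (@esum_single R _ _ _ ((0 : R), (0 : R))).
      by rewrite /Defs.support /=.
    by move=> p; rewrite lee_fin mulr_ge0 // expR_ge0.
  rewrite (@Zpart_fin R S _ _ HS u0 v0) lee_fin -/z.
  have -> : - (0 - x) * P.1 - (0 - x) * P.2 = x * s by rewrite /s; ring.
  move=> h; apply: (le_trans _ h); apply: ler_peMl; first exact: expR_ge0.
  by rewrite ler1n.
have z0 : 0 < z := lt_le_trans ex0 zlo.
have K0p : 0 < K0.
  have : 0 < expR (x * s) * K0 := lt_le_trans z0 zup.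
  by rewrite pmulr_rgt0.
have lK : 0 <= ln K0.
  rewrite -(ln1 R) ler_ln ?posrE //.
  by rewrite -(ler_pM2l ex0) mulr1 (le_trans zlo zup).
rewrite /logZ -/z ler_norml; apply/andP; split.
  have : 0 <= ln z - x * s.
    by rewrite subr_ge0 -ler_expR lnK ?posrE.
  by apply: le_trans; rewrite oppr_le0.
have : ln z <= ln (expR (x * s) * K0) by rewrite ler_ln ?posrE // ?mulr_gt0.
by rewrite lnM ?posrE // expRK lerBlDl.
Qed.

Theorem mainTheorem6 (R : realType) (eps : R) (A : R -> R) (B : R -> R -> R) :
  0 < eps ->
  (forall beta, 2 * pi < beta -> 0 <= A beta) ->
  (forall bL bR, 0 < bL -> 0 < bR -> 4 * pi ^+ 2 < bL * bR -> 0 <= B bL bR) ->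
  forall bL bR : R, 0 < bL -> 0 < bR -> bL * bR != 4 * pi ^+ 2 ->
  exists K : R, forall S : spectrum R,
    is_CFT_spectrum S -> has_vacuum S ->
    (forall beta, 2 * pi < beta -> (light_sum S eps beta <= (A beta)%:E)%E) ->
    (forall bL' bR', 0 < bL' -> 0 < bR' -> 4 * pi ^+ 2 < bL' * bR' ->
        (twist_sum S bL' bR' <= (B bL' bR')%:E)%E) ->
    (4 * pi ^+ 2 < bL * bR ->
       `| logZ S bL bR - cc S / 24 * (bL + bR) | <= K) /\
    (bL * bR < 4 * pi ^+ 2 ->
       `| logZ S bL bR - pi ^+ 2 * cc S / 6 * (bL^-1 + bR^-1) | <= K).
Proof.
move=> e0 _ _ bL bR bL0 bR0; rewrite neq_lt => /orP[h|h].
  have hP : ads (4 * pi ^+ 2 / bL, 4 * pi ^+ 2 / bR).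
    have c4 := c4_gt0 R.
    split => /=; rewrite ?divr_gt0 //.
    rewrite mulf_div ltr_pdivlMr ?mulr_gt0 //.
    by rewrite ltr_pM2l.
  have [K HK] := @ads_bound R eps A B _ e0 hP.
  exists K => S HS Hv Hl Htw; split => [h'|_]; first by exfalso; lra.
  have := HK S HS Hv Hl Htw; rewrite /= /logZ.
  have [_ _ _ _ modi] := HS.
  rewrite -modi //.
  suff -> : pi ^+ 2 * cc S / 6 * (bL^-1 + bR^-1) =
            cc S / 24 * (4 * pi ^+ 2 / bL + 4 * pi ^+ 2 / bR) by [].
  have bL1 : bL != 0 by rewrite gt_eqF.
  have bR1 : bR != 0 by rewrite gt_eqF.
  lra.
have hP : ads (bL, bR) by [].
have [K HK] := @ads_bound R eps A B _ e0 hP.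
exists K => S HS Hv Hl Htw; split => [_|h']; last by exfalso; lra.
exact: (HK S HS Hv Hl Htw).
Qed.
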